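(* A finite-dimensional Poisson $n$-Lie algebra $\mathcal P$ is nilpotent if and only if the operators $P_x$ and $Q_y$ are nilpotent for all $x\in\mathcal P$ and all $y\in\wedge^{n-1}\mathcal P$.
   Context: A Poisson $n$-Lie algebra is a commutative associative algebra $(\mathcal P,\cdot)$ with an $n$-linear skew-symmetric bracket satisfying the fundamental identity $[x_1,\dots,x_{n-1},[y_1,\dots,y_n]]=\sum_{i=1}^n[y_1,\dots,[x_1,\dots,x_{n-1},y_i],\dots,y_n]$ and the Leibniz rule $[y\cdot z,x_2,\dots,x_n]=y\cdot[z,x_2,\dots,x_n]+z\cdot[y,x_2,\dots,x_n]$. $P_x$ is the multiplication operator $z\mapsto x\cdot z$; for $y=y_1\wedge\cdots\wedge y_{n-1}$, $Q_y$ is the operator $z\mapsto[y_1,\dots,y_{n-1},z]$, extended linearly to $\wedge^{n-1}\mathcal P$. $\mathcal P$ is nilpotent if $\mathcal P^s=0$ for some $s$, where $\mathcal P^1=\mathcal P$, $\mathcal P^{k+1}=[\mathcal P^k,\mathcal P,\dots,\mathcal P]+\mathcal P^k\cdot\mathcal P$ (linear spans). *)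

(* Defs.v *)
From HB Require Import structures.
From mathcomp Require Import all_boot all_order all_algebra all_fingroup.
Set Implicit Arguments. Unset Strict Implicit. Unset Printing Implicit Defensive.
Import GRing.Theory.
Local Open Scope ring_scope.

Section PoissonNLie.
Variables (K : fieldType) (V : vectType K) (n : nat).
Variables (mul : V -> V -> V) (br : ('I_n -> V) -> V).

Definition upd (f : 'I_n -> V) (i : 'I_n) (x : V) : 'I_n -> V :=
  fun j => if j == i then x else f j.

(* the n-tuple (x_1, ..., x_{n-1}, z) *)
Definition app_last (x : 'I_n.-1 -> V) (z : V) : 'I_n -> V :=
  fun i => if (insub (nat_of_ord i) : option 'I_n.-1) is Some j then x j else z.

(* Q_x z = [x_1, ..., x_{n-1}, z] for decomposable x = x_1 /\ ... /\ x_{n-1} *)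
Definition Qop (x : 'I_n.-1 -> V) (z : V) : V := br (app_last x z).

Definition Pop (x : V) (z : V) : V := mul x z.

Definition comm_assoc_algebra : Prop :=
  [/\ forall (a : K) x y z, mul (a *: x + y) z = a *: mul x z + mul y z,
      forall (a : K) x y z, mul z (a *: x + y) = a *: mul z x + mul z y,
      forall x y, mul x y = mul y x &
      forall x y z, mul x (mul y z) = mul (mul x y) z].

Definition multilinear : Prop :=
  forall (f : 'I_n -> V) (i : 'I_n) (a : K) (x y : V),
    br (upd f i (a *: x + y)) = a *: br (upd f i x) + br (upd f i y).

Definition skew_symmetric : Prop :=
  forall (f : 'I_n -> V) (s : 'S_n),
    br (fun i => f (s i)) = (-1) ^+ odd_perm s *: br f.

Definition fundamental_identity : Prop :=
  forall (x : 'I_n.-1 -> V) (y : 'I_n -> V),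
    Qop x (br y) = \sum_(i < n) br (upd y i (Qop x (y i))).

Definition leibniz : Prop :=
  forall (f : 'I_n -> V) (i : 'I_n), nat_of_ord i = 0%N ->
    forall y z, br (upd f i (mul y z)) = mul y (br (upd f i z)) + mul z (br (upd f i y)).

Definition poisson_nLie : Prop :=
  [/\ comm_assoc_algebra, multilinear, skew_symmetric, fundamental_identity & leibniz].

Definition nilpotent_op (T : V -> V) : Prop :=
  exists k : nat, forall z, iter k T z = 0.

(* lcs k = P^(k+1): lcs 0 = P,
   lcs (k+1) = span([lcs k, P, ..., P]) + span(lcs k . P) *)
Fixpoint lcs (k : nat) : V -> Prop :=
  match k with
  | 0%N => fun _ => True
  | k'.+1 => fun v =>
      exists (m : nat) (c : 'I_m -> K) (w : 'I_m -> V),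
        (forall j,
           (exists f : 'I_n -> V,
              (forall i : 'I_n, nat_of_ord i = 0%N -> lcs k' (f i)) /\ w j = br f)
           \/ (exists a b : V, lcs k' a /\ w j = mul a b))
        /\ v = \sum_(j < m) c j *: w j
  end.

(* P^s with the paper's indexing P^1 = P *)
Definition Ppow (s : nat) : V -> Prop := lcs s.-1.

Definition nilpotent_alg : Prop :=
  exists s : nat, forall v, Ppow s v -> v = 0.

End PoissonNLie.

(* Main.v *)
Require Import Defs.
From HB Require Import structures.
From mathcomp Require Import all_boot all_order all_algebra all_fingroup.
From Stdlib Require Import Classical FunctionalExtensionality.
From mathcomp Require Import zify.
Import GRing.Theory.
Local Open Scope ring_scope.
Set Implicit Arguments. Unset Strict Implicit. Unset Printing Implicit Defensive.

Section Engel.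
Variable K : fieldType.

Lemma linfunP (aT rT : vectType K) (f : aT -> rT) (H : linear f) v :
  linfun f v = f v.
Proof.
pose F : {linear aT -> rT} := HB.pack f (GRing.isLinear.Build _ _ _ _ f H).
exact: (lfunE F v).
Qed.

Definition nilp (A : vectType K) (f : 'End(A)) := exists N, forall v, iter N f v = 0.
Definition lcomm (A : vectType K) (f g : 'End(A)) : 'End(A) := (f \o g)%VF - (g \o f)%VF.
Definition lie_closed (A : vectType K) (L : {vspace 'End(A)}) :=
  forall f g, f \in L -> g \in L -> lcomm f g \in L.

Section Comm.
Variable A : vectType K.
Implicit Types f g h : 'End(A).
Lemma lcommE f g v : lcomm f g v = f (g v) - g (f v).
Proof. by rewrite /lcomm add_lfunE opp_lfunE !comp_lfunE. Qed.
Lemma lcommDl f1 f2 g : lcomm (f1 + f2) g = lcomm f1 g + lcomm f2 g.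
Proof.
apply/lfunP=> v; rewrite add_lfunE !lcommE !add_lfunE linearD /=.
by rewrite opprD !addrA; congr (_ + _); rewrite -!addrA; congr (_ + _); rewrite addrC.
Qed.
Lemma lcommZl a f g : lcomm (a *: f) g = a *: lcomm f g.
Proof.
by apply/lfunP=> v; rewrite scale_lfunE !lcommE !scale_lfunE linearZ /= scalerBr.
Qed.
Lemma lcommA f g : lcomm f g = - lcomm g f.
Proof. by apply/lfunP=> v; rewrite opp_lfunE !lcommE opprB. Qed.
Lemma lcommDr f g1 g2 : lcomm f (g1 + g2) = lcomm f g1 + lcomm f g2.
Proof. by rewrite lcommA lcommDl opprD -!lcommA. Qed.
Lemma lcommZr a f g : lcomm f (a *: g) = a *: lcomm f g.
Proof. by rewrite lcommA lcommZl -scalerN -lcommA. Qed.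
Lemma lcommxx f : lcomm f f = 0.
Proof. by apply/lfunP=> v; rewrite lcommE subrr zero_lfunE. Qed.
End Comm.

Lemma single_step (A : zmodType) (y : A -> A) (S U : A -> Prop) :
  U 0 -> (forall v, S v -> S (y v)) ->
  forall N w, iter N y w = 0 -> S w -> ~ U w -> exists v, [/\ S v, ~ U v & U (y v)].
Proof.
move=> U0 Sy; elim=> [|N IH] w /=.
  by move=> -> _ /(_ U0).
move=> HN Sw Uw; case: (classic (U (y w))) => Uy; first by exists w.
by apply: (IH (y w)) => //; [rewrite -iterSr | apply: Sy].
Qed.

Lemma comm_nilp (A : zmodType) (F G : A -> A) N :
  (forall x y, F (x - y) = F x - F y) -> (forall x y, G (x - y) = G x - G y) ->
  (forall x, F (G x) = G (F x)) ->
  (forall x, iter N F x = 0) -> (forall x, iter N G x = 0) ->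
  forall x, iter (N + N) (fun y => F y - G y) x = 0.
Proof.
move=> FB GB FG FN GN.
have F0 : F 0 = 0 by move: (FB 0 0); rewrite subr0 subrr.
have G0 : G 0 = 0 by move: (GB 0 0); rewrite subr0 subrr.
have iF0 i : iter i F 0 = 0 by elim: i => //= i ->.
have iG0 i : iter i G 0 = 0 by elim: i => //= i ->.
have iFB i x y : iter i F (x - y) = iter i F x - iter i F y.
  by elim: i => //= i ->; rewrite FB.
have iGB i x y : iter i G (x - y) = iter i G x - iter i G y.
  by elim: i => //= i ->; rewrite GB.
have iFG i x : iter i F (G x) = G (iter i F x) by elim: i => //= i ->; rewrite FG.
pose H k y := forall i j, (i + j = k)%N -> iter i F (iter j G y) = 0.
have Hall y : H (N + N)%N y.
  move=> i j hij; case: (leqP N i) => hi.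
    by rewrite -(subnK hi) iterD FN; apply: iF0.
  have hj : (N <= j)%N by rewrite -(leq_add2l i) hij leq_add2r ltnW.
  by rewrite -(subnK hj) iterD GN (iG0 (j - N)%N); apply: iF0.
have Hstep k y : H k.+1 y -> H k (F y - G y).
  move=> Hy i j hij; rewrite iGB iFB.
  have -> : iter j G (F y) = F (iter j G y).
    by elim: j {hij} => //= j ->; rewrite FG.
  rewrite -iterSr -iterSr (Hy i.+1 j) ?(Hy i j.+1) ?subrr //; by rewrite ?addnS ?addSn hij.
have Hit m k y : H (m + k)%N y -> H k (iter m (fun y => F y - G y) y).
  elim: m k y => [|m IH] k y //= Hy.
  by apply: Hstep; apply: IH; rewrite -addSnnS.
move=> x; have := Hit (N + N)%N 0%N x; rewrite addn0 => /(_ (Hall x)).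
by move=> /(_ 0%N 0%N erefl).
Qed.


Lemma jac_zmod (M : zmodType) (p q r s p' s' : M) :
  (p - q - (r - s)) - (p' - r - (q - s')) = (p - p') - (s' - s).
Proof.
rewrite !opprB !addrA.
rewrite (addrAC (p - q + s - r + q) (- s') r).
rewrite (addrAC (p - q + s - r) q r) subrK.
rewrite (addrAC (p - q) s q) subrK.
by rewrite addrAC (addrAC p s).
Qed.

Section Ad.
Variable A : vectType K.
Implicit Types a b g : 'End(A).

Lemma adf_lin a : linear (lcomm a).
Proof. by move=> c g h; rewrite lcommDr lcommZr. Qed.
Definition adf a : 'End('End(A)) := linfun (lcomm a).
Lemma adfE a g : adf a g = lcomm a g.
Proof. exact: (linfunP (adf_lin a)). Qed.
Lemma adf_lin2 : linear adf.
Proof.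
move=> c a b; apply/lfunP=> g.
by rewrite add_lfunE scale_lfunE !adfE lcommDl lcommZl.
Qed.
Definition adl : 'Hom('End(A), 'End('End(A))) := linfun adf.
Lemma adlE a : adl a = adf a.
Proof. exact: (linfunP adf_lin2). Qed.

Lemma jacobi a b : lcomm (adf a) (adf b) = adf (lcomm a b).
Proof.
apply/lfunP=> g; rewrite lcommE !adfE; apply/lfunP=> v.
rewrite add_lfunE opp_lfunE !(lcommE a, lcommE b, lcommE (lcomm a b)).
by rewrite !(raddfB a, raddfB b, raddfB g) jac_zmod.
Qed.

Lemma iter_compl a g i v : iter i (fun h => (a \o h)%VF) g v = iter i a (g v).
Proof. by elim: i => //= i IH; rewrite comp_lfunE IH. Qed.
Lemma iter_compr a g i v : iter i (fun h => (h \o a)%VF) g v = g (iter i a v).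
Proof.
elim: i v => //= i IH v; rewrite comp_lfunE IH; congr (g _).
by rewrite -iterS iterSr.
Qed.

Lemma adf_nilp a : nilp a -> nilp (adf a).
Proof.
case=> N HN; exists (N + N)%N => g.
rewrite (eq_iter (f' := fun h => (a \o h)%VF - (h \o a)%VF)); last first.
  by move=> h; rewrite adfE.
apply: comm_nilp => [x y|x y|x|x|x].
- by apply/lfunP=> v; rewrite add_lfunE opp_lfunE !comp_lfunE add_lfunE opp_lfunE linearB.
- by apply/lfunP=> v; rewrite add_lfunE opp_lfunE !comp_lfunE add_lfunE opp_lfunE.
- by rewrite comp_lfunA.
- by apply/lfunP=> v; rewrite iter_compl HN zero_lfunE.
- by apply/lfunP=> v; rewrite iter_compr HN zero_lfunE linear0.
Qed.
End Ad.


Lemma pred_vspace (A : vectType K) (S : A -> Prop) :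
  S 0 -> (forall a u v, S u -> S v -> S (a *: u + v)) ->
  exists X : {vspace A}, forall v, v \in X <-> S v.
Proof.
move=> S0 Slin.
have Sadd u v : S u -> S v -> S (u + v).
  by move=> Su Sv; rewrite -[u]scale1r; apply: Slin.
have Sscal a u : S u -> S (a *: u).
  by move=> Su; rewrite -[a *: u]addr0; apply: Slin.
suff H m : exists X : {vspace A},
    (forall v, v \in X -> S v) /\ ((m <= \dim X)%N \/ forall v, S v -> v \in X).
  have [X [HX [Hd|Hall]]] := H (dim A).+1.
  - by have := dimvS (subvf X); rewrite dimvf => /(leq_trans Hd); rewrite ltnn.
  - by exists X => v; split; [apply: HX | apply: Hall].
elim: m => [|m [X [HX [Hd|Hall]]]].
- exists 0%VS; split; last by left.
  by move=> v; rewrite memv0 => /eqP ->.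
- case: (classic (forall v, S v -> v \in X)) => Hall; first by exists X; split => //; right.
  have [v Sv vX] : exists2 v, S v & v \notin X.
    apply: NNPP => H; apply: Hall => v Sv; apply: NNPP => vX; apply: H.
    by exists v => //; apply/negP.
  exists (X + <[v]>)%VS; split.
  + move=> w /memv_addP [u uX [w' /vlineP [c ->] ->]].
    by apply: Sadd; [exact: HX | exact: Sscal].
  + left; have : (\dim X < \dim (X + <[v]>))%N.
      rewrite (ltn_leqif (dimv_leqif_eq (addvSl X <[v]>))).
      apply: contra vX => /eqP ->; exact: (subvP (addvSr X <[v]>) v (memv_line v)).
    by apply: leq_trans.
- by exists X; split => //; right.
Qed.

Lemma lie0 (A : vectType K) : lie_closed (0%VS : {vspace 'End(A)}).
Proof. by move=> f g; rewrite !memv0 => /eqP -> /eqP ->; rewrite lcommxx. Qed.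

Lemma maxsub (A : vectType K) (L : {vspace 'End(A)}) m :
  forall K0 : {vspace 'End(A)}, (K0 <= L)%VS -> K0 != L -> lie_closed K0 ->
  (\dim L - \dim K0 <= m)%N ->
  exists K1 : {vspace 'End(A)}, [/\ (K1 <= L)%VS, K1 != L, lie_closed K1 &
    forall K2, (K1 <= K2)%VS -> (K2 <= L)%VS -> lie_closed K2 -> K2 = K1 \/ K2 = L].
Proof.
elim: m => [|m IH] K0 sK0 nK0 lK0 hd.
  by move/negP: nK0; case; rewrite eqEdim sK0 /= -subn_eq0 -leqn0.
case: (classic (forall K2, (K0 <= K2)%VS -> (K2 <= L)%VS -> lie_closed K2 ->
   K2 = K0 \/ K2 = L)) => Hmax; first by exists K0.
have [K2 [s02 s2L l2 n20 n2L]] : exists K2, [/\ (K0 <= K2)%VS, (K2 <= L)%VS,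
    lie_closed K2, K2 <> K0 & K2 <> L].
  apply: NNPP => H; apply: Hmax => K2 s02 s2L l2.
  case: (classic (K2 = K0)) => [|h0]; first by left.
  case: (classic (K2 = L)) => [|hL]; first by right.
  by case: H; exists K2.
have d02 : (\dim K0 < \dim K2)%N.
  rewrite (ltn_leqif (dimv_leqif_eq s02)); apply/eqP => e; exact: n20.
have d2L : (\dim K2 <= \dim L)%N by apply: dimvS.
have [K1 [s1L n1L l1 m1]] := IH K2 s2L (introN eqP n2L) l2 ltac:(lia).
by exists K1.
Qed.

Lemma engel d : forall (A : vectType K) (L : {vspace 'End(A)}) (U W : A -> Prop),
  (\dim L <= d)%N -> lie_closed L -> (forall f, f \in L -> nilp f) ->
  U 0 -> (forall u v, U u -> U v -> U (u + v)) -> (forall c u, U u -> U (c *: u)) ->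
  (forall f u, f \in L -> U u -> U (f u)) -> (forall f w, f \in L -> W w -> W (f w)) ->
  forall w0, W w0 -> ~ U w0 ->
  exists v, [/\ W v, ~ U v & forall f, f \in L -> U (f v)].
Proof.
elim: d => [|d IH] A L U W hd lL nL U0 Uadd Uscal UL WL w0 Ww0 Uw0.
  exists w0; split => // f.
  have -> : L = 0%VS by apply/eqP; rewrite -dimv_eq0 -leqn0.
  by rewrite memv0 => /eqP ->; rewrite zero_lfunE.
case: (eqVneq L 0%VS) => [L0|Ln0].
  by exists w0; split => // f; rewrite L0 memv0 => /eqP ->; rewrite zero_lfunE.
have [K1 [sK1 nK1 lK1 maxK1]] :=
  @maxsub A L (\dim L) 0%VS (sub0v L) ltac:(by rewrite eq_sym) (@lie0 A) (leq_subr _ _).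
have dK1 : (\dim K1 < \dim L)%N by rewrite (ltn_leqif (dimv_leqif_eq sK1)).
have [w1 w1L w1K] : exists2 w, w \in L & w \notin K1.
  by apply/subvPn; apply: contra nK1 => sLK; rewrite eqEsubv sK1 sLK.
have [] := IH _ (adl A @: K1)%VS (fun g => g \in K1) (fun g => g \in L)
  _ _ _ _ _ _ _ _ w1 w1L (negP w1K).
- apply: (@leq_trans (\dim K1)); last by rewrite -ltnS (leq_trans dK1 hd).
  by rewrite -[X in (_ <= X)%N](limg_ker_dim (adl A) K1) leq_addl.
- move=> f g /memv_imgP [a aK ->] /memv_imgP [b bK ->].
  by rewrite !adlE jacobi -adlE; apply: memv_img; exact: lK1.
- move=> f /memv_imgP [a aK ->]; rewrite adlE; apply: adf_nilp; apply: nL.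
  exact: (subvP sK1).
- exact: mem0v.
- exact: memvD.
- move=> c u; exact: memvZ.
- by move=> f u /memv_imgP [a aK ->] uK; rewrite adlE adfE; apply: lK1.
- by move=> f u /memv_imgP [a aK ->] uL; rewrite adlE adfE; apply: lL => //; apply: (subvP sK1).
move=> y [yL yK hy].
have hyK k : k \in K1 -> lcomm k y \in K1.
  by move=> kK; have := hy _ (memv_img (adl A) kK); rewrite adlE adfE.
have K2L : (K1 + <[y]>)%VS = L.
  have [] := maxK1 (K1 + <[y]>)%VS (addvSl _ _).
  - by rewrite subv_add sK1 -memvE.
  - move=> f g /memv_addP [k1 k1K [f' /vlineP [c1 ->] ->]]
               /memv_addP [k2 k2K [g' /vlineP [c2 ->] ->]].
    rewrite lcommDl !lcommDr !lcommZl !lcommZr lcommxx !scaler0 addr0 (lcommA y k2).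
    apply: (subvP (addvSl K1 <[y]>)).
    apply: memvD; first apply: memvD.
    + exact: lK1.
    + exact/memvZ/hyK.
    + by apply/memvZ; rewrite memvN; apply: hyK.
  - move=> e; exfalso; move: yK; rewrite -e.
    by rewrite (subvP (addvSr K1 <[y]>) y (memv_line y)).
  - done.
have [w2 [Ww2 Uw2 hK]] := IH A K1 U W ltac:(lia) lK1
  (fun f fK => nL f (subvP sK1 f fK)) U0 Uadd Uscal
  (fun f u fK => UL f u (subvP sK1 f fK)) (fun f w fK => WL f w (subvP sK1 f fK))
  w0 Ww0 Uw0.
have [N HN] := nL y yL.
have Sy : forall v, (W v /\ forall k, k \in K1 -> U (k v)) ->
    (W (y v) /\ forall k, k \in K1 -> U (k (y v))).
  move=> v [Wv Hv]; split; first exact: WL.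
  move=> k kK.
  have -> : k (y v) = lcomm k y v + y (k v) by rewrite lcommE subrK.
  apply: Uadd; first exact: Hv (hyK k kK).
  exact: UL yL (Hv k kK).
have [v [[Wv Hv] Uv Uyv]] := @single_step A y
  (fun v => W v /\ forall k, k \in K1 -> U (k v)) U U0 Sy N w2 (HN w2) (conj Ww2 hK) Uw2.
exists v; split => // f; rewrite -K2L => /memv_addP [k kK [f' /vlineP [c ->] ->]].
rewrite add_lfunE scale_lfunE; apply: Uadd; [exact: Hv | exact: Uscal].
Qed.

End Engel.


Section Main.
Variables (K : fieldType) (V : vectType K) (n' : nat).
Local Notation n := n'.+2.
Variables (mul : V -> V -> V) (br : ('I_n -> V) -> V).
Hypotheses (Hca : comm_assoc_algebra mul) (Hml : multilinear br)
  (Hsk : skew_symmetric br) (Hfi : fundamental_identity br) (Hlb : leibniz mul br).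

Local Notation t := (tperm (ord0 : 'I_n) ord_max).

Lemma mul_lin x : linear (mul x).
Proof. by case: Hca => _ H _ _ a u v; rewrite H. Qed.
Definition Pl x : 'End(V) := linfun (mul x).
Lemma PlE x v : Pl x v = mul x v.
Proof. exact: (linfunP (mul_lin x)). Qed.
Lemma mulC x y : mul x y = mul y x.
Proof. by case: Hca. Qed.
Lemma mulA x y z : mul x (mul y z) = mul (mul x y) z.
Proof. by case: Hca. Qed.
Lemma Pl_lin a x y : Pl (a *: x + y) = a *: Pl x + Pl y.
Proof.
apply/lfunP=> v; rewrite add_lfunE scale_lfunE !PlE.
by case: Hca => H _ _ _; rewrite H.
Qed.
Lemma Pl0 : Pl 0 = 0.
Proof.
by have := Pl_lin (-1) 0 0; rewrite scaler0 addr0 scaleN1r addNr.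
Qed.

Lemma app_last_upd (y : 'I_n.-1 -> V) z : app_last y z = upd (app_last y 0) ord_max z.
Proof.
apply: functional_extensionality => i; rewrite /app_last /upd.
case: eqP => [->|ne]; case: insubP => [j hj ej|hi] //=.
- by move: hj; rewrite /= ltnn.
- exfalso; apply: ne; apply: val_inj => /=.
  move: (ltn_ord i) hi; rewrite ltnS leq_eqVlt => /orP [/eqP //|-> //].
Qed.

Lemma app_last_max (y : 'I_n.-1 -> V) z : app_last y z ord_max = z.
Proof. by rewrite app_last_upd /upd eqxx. Qed.

Lemma app_last_widen (y : 'I_n.-1 -> V) z (i : 'I_n.-1) :
  app_last y z (widen_ord (leqnSn _) i) = y i.
Proof.
rewrite /app_last; case: insubP => [j _ ej|].
- by congr (y _); apply: val_inj; rewrite ej.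
- by rewrite /= ltn_ord.
Qed.

Lemma Q_lin y : linear (Qop br y).
Proof.
move=> a u v; rewrite /Qop (app_last_upd y (a *: u + v)) (app_last_upd y u).
by rewrite (app_last_upd y v) Hml.
Qed.
Definition Ql y : 'End(V) := linfun (Qop br y).
Lemma QlE y v : Ql y v = Qop br y v.
Proof. exact: (linfunP (Q_lin y)). Qed.

Lemma br_swap f : br (fun i => f (t i)) = - br f.
Proof.
have h : (ord0 : 'I_n) != ord_max by rewrite -(inj_eq val_inj).
have := Hsk f t; rewrite odd_tperm h expr1 scaleN1r; exact.
Qed.

Lemma br_Q f : br f = - Qop br (fun j : 'I_n.-1 => f (t (widen_ord (leqnSn _) j))) (f ord0).
Proof.
rewrite /Qop.
have -> : app_last (fun j : 'I_n.-1 => f (t (widen_ord (leqnSn _) j))) (f ord0)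
        = (fun i => f (t i)).
  apply: functional_extensionality => i; rewrite /app_last.
  case: insubP => [j _ ej|].
  - by congr (f (t _)); apply: val_inj; rewrite /= ej.
  - move=> hi; have -> : i = ord_max.
      apply: val_inj => /=; move: (ltn_ord i) hi.
      by rewrite ltnS leq_eqVlt => /orP [/eqP //|-> //].
    by rewrite tpermR.
by rewrite br_swap opprK.
Qed.

Definition Gq (y : 'I_n.-1 -> V) : 'I_n -> V := fun i => app_last y 0 (t i).

Lemma Q_br y z : Qop br y z = - br (upd (Gq y) ord0 z).
Proof.
have -> : upd (Gq y) ord0 z = (fun i => app_last y z (t i)).
  apply: functional_extensionality => i; rewrite /upd /Gq.
  case: eqP => [->|ne]; first by rewrite tpermL app_last_max.
  rewrite (app_last_upd y z) /upd.
  case: eqP => // e; exfalso; apply: ne.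
  by apply: (@perm_inj _ t); rewrite e tpermL.
by rewrite br_swap opprK.
Qed.

Lemma mulN x v : mul x (- v) = - mul x v.
Proof. by rewrite -!PlE linearN. Qed.

Lemma Q_der y x w : Qop br y (mul x w) = mul x (Qop br y w) + mul w (Qop br y x).
Proof.
by rewrite !Q_br (@Hlb (Gq y) ord0 erefl) !mulN opprD.
Qed.

Lemma lcs_P k x z : lcs mul br k z -> lcs mul br k.+1 (Pop mul x z).
Proof.
move=> hz /=; exists 1%N, (fun _ => 1), (fun _ => mul z x); split.
  by move=> j; right; exists z, x.
by rewrite big_ord1 scale1r /Pop mulC.
Qed.

Lemma lcs_Q k m (c : 'I_m -> K) (xs : 'I_m -> 'I_n.-1 -> V) z :
  lcs mul br k z -> lcs mul br k.+1 (\sum_(j < m) c j *: Qop br (xs j) z).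
Proof.
move=> hz /=; exists m, (fun j => - c j), (fun j => br (upd (Gq (xs j)) ord0 z)); split.
  move=> j; left; exists (upd (Gq (xs j)) ord0 z); split => // i i0.
  have -> : i = ord0 by apply: val_inj.
  by rewrite /upd eqxx.
by apply: eq_bigr => j _; rewrite Q_br scalerN scaleNr.
Qed.

Lemma iter_lcs (T : V -> V) : (forall k z, lcs mul br k z -> lcs mul br k.+1 (T z)) ->
  forall k z, lcs mul br k (iter k T z).
Proof. by move=> HT; elim=> [|k IH] z //=; apply: HT. Qed.

Definition LQp (f : 'End(V)) :=
  exists s : seq (K * ('I_n.-1 -> V)), f = \sum_(p <- s) p.1 *: Ql p.2.

Lemma LQp0 : LQp 0.
Proof. by exists [::]; rewrite big_nil. Qed.
Lemma LQp_lin a f g : LQp f -> LQp g -> LQp (a *: f + g).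
Proof.
move=> [sf ->] [sg ->]; exists ([seq (a * p.1, p.2) | p <- sf] ++ sg).
rewrite big_cat big_map scaler_sumr; congr (_ + _).
by apply: eq_bigr => p _; rewrite scalerA.
Qed.
Lemma LQp_add f g : LQp f -> LQp g -> LQp (f + g).
Proof. by move=> hf hg; rewrite -[f]scale1r; apply: LQp_lin. Qed.
Lemma LQp_scale a f : LQp f -> LQp (a *: f).
Proof. by move=> hf; rewrite -[a *: f]addr0; apply: LQp_lin => //; apply: LQp0. Qed.
Lemma LQp_sum (I : Type) (r : seq I) (F : I -> 'End(V)) :
  (forall i, LQp (F i)) -> LQp (\sum_(i <- r) F i).
Proof.
move=> HF; elim: r => [|i r IH]; first by rewrite big_nil; apply: LQp0.
by rewrite big_cons; apply: LQp_add.
Qed.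
Lemma LQp_Ql y : LQp (Ql y).
Proof. by exists [:: (1, y)]; rewrite big_seq1 scale1r. Qed.

Lemma upd_app_last (y : 'I_n.-1 -> V) v (j : 'I_n.-1) w :
  upd (app_last y v) (widen_ord (leqnSn _) j) w = app_last (upd y j w) v.
Proof.
apply: functional_extensionality => k; rewrite /upd /app_last.
case: insubP => [k' hk ek | hk].
- have -> : (k == widen_ord (leqnSn _) j) = (k' == j).
    by rewrite -(inj_eq val_inj) /= -ek (inj_eq val_inj).
  by [].
- case: eqP => // e; move: hk; by rewrite e /= ltn_ord.
Qed.

Lemma upd_last (y : 'I_n.-1 -> V) v w : upd (app_last y v) ord_max w = app_last y w.
Proof.
rewrite (app_last_upd y w) (app_last_upd y v).
by apply: functional_extensionality => k; rewrite /upd; case: eqP.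
Qed.

Lemma comm_Ql x y :
  lcomm (Ql x) (Ql y) = \sum_(j < n.-1) Ql (upd y j (Qop br x (y j))).
Proof.
apply/lfunP => v; rewrite lcommE sum_lfunE !QlE.
under eq_bigr do rewrite QlE.
have -> : Qop br y v = br (app_last y v) by [].
rewrite Hfi big_ord_recr /= app_last_max upd_last.
rewrite -/(Qop br y (Qop br x v)) addrK.
apply: eq_bigr => j _; rewrite app_last_widen upd_app_last.
by [].
Qed.

Lemma lcomm0l (f : 'End(V)) : lcomm 0 f = 0.
Proof. by apply/lfunP => v; rewrite lcommE !zero_lfunE linear0 subrr. Qed.
Lemma lcomm0r (f : 'End(V)) : lcomm f 0 = 0.
Proof. by rewrite lcommA lcomm0l oppr0. Qed.

Lemma LQp_comm f g : LQp f -> LQp g -> LQp (lcomm f g).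
Proof.
move=> [sf ->] [sg ->].
elim: sf => [|p sf IH]; first by rewrite big_nil lcomm0l; apply: LQp0.
rewrite big_cons lcommDl lcommZl; apply: LQp_add; last exact: IH.
apply: LQp_scale; clear IH.
elim: sg => [|q sg IH2]; first by rewrite big_nil lcomm0r; apply: LQp0.
rewrite big_cons lcommDr lcommZr; apply: LQp_add; last exact: IH2.
apply: LQp_scale.
by rewrite comm_Ql; apply: LQp_sum => j; apply: LQp_Ql.
Qed.

Lemma LQp_der f : LQp f -> forall x w, f (mul x w) = mul x (f w) + mul w (f x).
Proof.
move=> [s ->] x w; elim: s => [|p s IH].
  by rewrite big_nil !zero_lfunE -!PlE !linear0 addr0.
rewrite big_cons !add_lfunE !scale_lfunE IH !QlE Q_der.
rewrite (mul_lin x) (mul_lin w) scalerDr.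
exact: addrACA.
Qed.

Hypothesis HQ : forall (k : nat) (c : 'I_k -> K) (xs : 'I_k -> 'I_n.-1 -> V),
      nilpotent_op (fun z => \sum_(j < k) c j *: Qop br (xs j) z).
Hypothesis HP : forall x : V, nilpotent_op (Pop mul x).

Lemma LQp_nilp f : LQp f -> nilp f.
Proof.
move=> [s ->].
have [N HN] := HQ (fun j : 'I_(size s) => (nth (0, fun _ => 0) s j).1)
                  (fun j : 'I_(size s) => (nth (0, fun _ => 0) s j).2).
exists N => v; rewrite (eq_iter (f' := fun z => \sum_(j < size s)
   (nth (0, fun _ => 0) s j).1 *: Qop br (nth (0, fun _ => 0) s j).2 z)) ?HN //.
move=> z; rewrite sum_lfunE (big_nth (0, fun _ => 0)) big_mkord.
by apply: eq_bigr => j _; rewrite scale_lfunE QlE.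
Qed.

Lemma Pl_nilp x : nilp (Pl x).
Proof.
have [N HN] := HP x; exists N => v.
by rewrite (eq_iter (f' := Pop mul x)) ?HN // => z; rewrite PlE.
Qed.

Lemma mulx0 x : mul x 0 = 0.
Proof. by rewrite -PlE linear0. Qed.

Lemma lfun_lin (f : 'End(V)) a u v : f (a *: u + v) = a *: f u + f v.
Proof. exact: linearP. Qed.

Fixpoint Z (j : nat) : V -> Prop :=
  match j with
  | 0%N => fun v => v = 0
  | j'.+1 => fun v => (forall x, Z j' (mul x v)) /\ (forall f, LQp f -> Z j' (f v))
  end.

Lemma Zlin j : Z j 0 /\ forall a u v, Z j u -> Z j v -> Z j (a *: u + v).
Proof.
elim: j => [|j [Z0 Zl]] /=.
  by split=> // a u v -> ->; rewrite scaler0 addr0.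
split.
  by split => [x|f _]; [rewrite mulx0 | rewrite linear0].
move=> a u v [hu1 hu2] [hv1 hv2]; split => [x|f hf].
  by rewrite (mul_lin x); apply: Zl.
by rewrite lfun_lin; apply: Zl; [apply: hu2 | apply: hv2].
Qed.

Lemma Z0 j : Z j 0. Proof. exact: (Zlin j).1. Qed.
Lemma Zadd j u v : Z j u -> Z j v -> Z j (u + v).
Proof. by move=> hu hv; rewrite -[u]scale1r; apply: (Zlin j).2. Qed.
Lemma Zscale j a u : Z j u -> Z j (a *: u).
Proof. by move=> hu; rewrite -[a *: u]addr0; apply: (Zlin j).2 => //; apply: Z0. Qed.
Lemma Zopp j u : Z j u -> Z j (- u).
Proof. by move=> hu; rewrite -scaleN1r; apply: Zscale. Qed.
Lemma Zsub j u v : Z j u -> Z j v -> Z j (u - v).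
Proof. by move=> hu hv; apply: Zadd => //; apply: Zopp. Qed.

Lemma Zmono j v : Z j v -> Z j.+1 v.
Proof.
elim: j v => [|j IH] v /=.
  by move=> ->; split => [x|f _]; [rewrite mulx0 | rewrite linear0].
by move=> [h1 h2]; split => [x|f hf]; apply: IH; [apply: h1 | apply: h2].
Qed.

Lemma Zinv j v : Z j v -> (forall x, Z j (mul x v)) /\ (forall f, LQp f -> Z j (f v)).
Proof.
case: j => [|j] /=.
  by move=> ->; split => [x|f _]; [rewrite mulx0 | rewrite linear0].
by move=> [h1 h2]; split => [x|f hf]; apply: Zmono; [apply: h1 | apply: h2].
Qed.

Lemma Zstep j : (exists w0, ~ Z j w0) -> exists v, ~ Z j v /\ Z j.+1 v.
Proof.
move=> [w0 hw0].
have [LP hLP] := @pred_vspace K _ (fun f : 'End(V) => exists x, f = Pl x)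
  (ex_intro _ 0 (esym Pl0))
  (fun a f g hf hg => match hf, hg with ex_intro x ex, ex_intro y ey =>
     ex_intro _ (a *: x + y) (etrans (f_equal2 (fun f g => a *: f + g) ex ey) (esym (Pl_lin a x y))) end).
have lieP : lie_closed LP.
  move=> f g /hLP [x ->] /hLP [y ->]; apply/hLP; exists 0; rewrite Pl0.
  apply/lfunP => v; rewrite lcommE !PlE zero_lfunE mulA (mulC x y) -mulA.
  by rewrite (mulA y x) subrr.
have nilP : forall f, f \in LP -> nilp f by move=> f /hLP [x ->]; apply: Pl_nilp.
have UP : forall f u, f \in LP -> Z j u -> Z j (f u).
  by move=> f u /hLP [x ->] hu; rewrite PlE; apply: (Zinv hu).1.
have [v1 [_ hv1 Hv1]] := @engel K (\dim LP) V LP (Z j) (fun _ => True) (leqnn _) lieP nilP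
  (Z0 j) (@Zadd j) (@Zscale j) UP (fun _ _ _ _ => I) w0 I hw0.
have [LQ hLQ] := @pred_vspace K _ LQp LQp0 LQp_lin.
have hW1 : forall x, Z j (mul x v1).
  by move=> x; rewrite -PlE; apply: Hv1; apply/hLP; exists x.
have lieQ : lie_closed LQ.
  by move=> f g /hLQ hf /hLQ hg; apply/hLQ; apply: LQp_comm.
have nilQ : forall f, f \in LQ -> nilp f by move=> f /hLQ; apply: LQp_nilp.
have UQ : forall f u, f \in LQ -> Z j u -> Z j (f u).
  by move=> f u /hLQ hf hu; apply: (Zinv hu).2.
have WQ : forall f w, f \in LQ -> (forall x, Z j (mul x w)) -> forall x, Z j (mul x (f w)).
  move=> f w /hLQ hf hw x.
  have e := LQp_der hf x w.
  have -> : mul x (f w) = f (mul x w) - mul w (f x) by rewrite e addrK.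
  apply: Zsub; first exact: (Zinv (hw x)).2.
  by rewrite mulC; apply: hw.
have [v [Wv hv Hv]] := @engel K (\dim LQ) V LQ (Z j) (fun v => forall x, Z j (mul x v))
  (leqnn _) lieQ nilQ (Z0 j) (@Zadd j) (@Zscale j) UQ WQ v1 hW1 hv1.
exists v; split => //; split => // f hf; apply: Hv; exact/hLQ.
Qed.

Lemma Zgrow j : (forall v, Z j v) \/
  exists X : {vspace V}, (forall v, v \in X <-> Z j v) /\ (j <= \dim X)%N.
Proof.
elim: j => [|j [Hall|[X [hX hd]]]].
- right; exists 0%VS; split => // v; rewrite memv0 /=.
  by split => [/eqP|->].
- by left => v; apply: Zmono.
- case: (classic (forall v, Z j.+1 v)) => [H|H]; first by left.
  right.
  have [w0 hw0] : exists w0, ~ Z j w0.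
    apply: NNPP => hn; apply: H => v; apply: Zmono; apply: NNPP => hv; apply: hn.
    by exists v.
  have [v [hv Hv]] := Zstep (ex_intro _ w0 hw0).
  have [Y hY] := @pred_vspace K _ (Z j.+1) (Z0 j.+1) (Zlin j.+1).2.
  exists Y; split => //.
  have sXY : (X <= Y)%VS by apply/subvP => u /hX hu; apply/hY; apply: Zmono.
  have vY : v \in Y by apply/hY.
  have vX : v \notin X by apply/negP => /hX.
  have : (\dim X < \dim Y)%N.
    rewrite (ltn_leqif (dimv_leqif_eq sXY)); apply: contra vX => /eqP ->; exact: vY.
  by apply: leq_ltn_trans.
Qed.

Lemma Zall v : Z (dim V).+1 v.
Proof.
case: (Zgrow (dim V).+1) => [H|[X [_ hd]]]; first exact: H.
by exfalso; have := dimvS (subvf X); rewrite dimvf => /(leq_trans hd); rewrite ltnn.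
Qed.

Lemma lcsZ k : (k <= (dim V).+1)%N -> forall v, lcs mul br k v -> Z ((dim V).+1 - k) v.
Proof.
elim: k => [|k IH] hk v.
  by rewrite subn0 => _; apply: Zall.
move=> /= [m' [c [w [Hw ->]]]].
have e := subnSK hk.
apply: (big_ind (Z ((dim V).+1 - k.+1))) => [|a b ha hb|i _].
- exact: Z0.
- exact: Zadd.
apply: Zscale.
case: (Hw i) => [[f [hf ->]]|[a [b [ha ->]]]].
- rewrite br_Q -QlE; apply: Zopp.
  have := IH (ltnW hk) _ (hf ord0 erefl); rewrite -e => /= [[_ h2]].
  by apply: h2; apply: LQp_Ql.
- have := IH (ltnW hk) _ ha; rewrite -e => /= [[h1 _]].
  by rewrite mulC; apply: h1.
Qed.

Lemma backward : nilpotent_alg mul br.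
Proof.
exists (dim V).+2 => v; rewrite /Ppow /= => /(lcsZ (leqnn _)).
by rewrite subnn.
Qed.

Lemma forward : nilpotent_alg mul br ->
  (forall x : V, nilpotent_op (Pop mul x)) /\
  (forall (k : nat) (c : 'I_k -> K) (xs : 'I_k -> 'I_n.-1 -> V),
      nilpotent_op (fun z => \sum_(j < k) c j *: Qop br (xs j) z)).
Proof.
move=> [s Hs]; split.
  move=> x; exists s.-1 => z; apply: Hs; rewrite /Ppow.
  by apply: iter_lcs => k z'; apply: lcs_P.
move=> k c xs; exists s.-1 => z; apply: Hs; rewrite /Ppow.
by apply: iter_lcs => k' z'; apply: lcs_Q.
Qed.

End Main.

Theorem theorem5p5 (K : fieldType) (V : vectType K) (n : nat)
    (mul : V -> V -> V) (br : ('I_n -> V) -> V) :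
  (2 <= n)%N ->
  poisson_nLie mul br ->
  nilpotent_alg mul br <->
  ((forall x : V, nilpotent_op (Pop mul x)) /\
   (forall (k : nat) (c : 'I_k -> K) (xs : 'I_k -> 'I_n.-1 -> V),
      nilpotent_op (fun z => \sum_(j < k) c j *: Qop br (xs j) z))).
Proof.
case: n br => [|[|n']] br hn; try by [].
case=> Hca Hml Hsk Hfi Hlb; split.
  exact: forward.
by case=> HP HQ; apply: (@backward K V n' mul br Hca Hml Hsk Hfi Hlb HQ HP).
Qed.
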